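(* Let $\mathcal{H}$ be a real Hilbert space, let $A\colon \mathcal{H}\rightrightarrows\mathcal{H}$ be maximally monotone, let $B\colon \mathcal{H}\to\mathcal{H}$ be monotone and $L_1$-Lipschitz, and let $C\colon \mathcal{H}\to\mathcal{H}$ be $1/L_2$-cocoercive. Suppose that $(A+B+C)^{-1}(0)\neq\varnothing$ and $\lambda\in\left(0,\frac{2}{4L_1+L_2}\right)$. Given $x_0,x_{-1}\in\mathcal{H}$, define the sequence $(x_k)$ by $$x_{k+1} = J_{\lambda A}\bigl(x_k - 2\lambda B(x_k) + \lambda B(x_{k-1}) -\lambda C(x_k) \bigr) \quad\forall k\in\mathbb{N}.$$ Then $(x_k)$ converges weakly to a point contained in $(A+B+C)^{-1}(0)$.
   Context: $J_{\lambda A}:=(I+\lambda A)^{-1}$ is the resolvent. $C$ is $1/L_2$-cocoercive if $\langle x-y,C(x)-C(y)\rangle\geq \frac{1}{L_2}\|C(x)-C(y)\|^2$ for all $x,y\in\mathcal{H}$. *)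

(* Defs.v *)
From HB Require Import structures.
From mathcomp Require Import all_boot all_order all_algebra.
From mathcomp Require Import all_classical all_reals all_analysis.
Set Implicit Arguments. Unset Strict Implicit. Unset Printing Implicit Defensive.
Import Order.TTheory GRing.Theory Num.Theory.
Import numFieldNormedType.Exports.
Local Open Scope classical_set_scope.
Local Open Scope ring_scope.

(* A real Hilbert space is a complete normed space whose norm comes from
   an inner product [ip]: symmetric, linear in the first argument, and
   ip x x = |x|^2. *)
Definition is_inner_product (R : realType) (H : normedModType R)
  (ip : H -> H -> R) : Prop :=
  (forall x y, ip x y = ip y x) /\
  (forall (a : R) (x y z : H), ip (a *: x + y) z = a * ip x z + ip y z) /\
  (forall x, ip x x = `|x| ^+ 2).

Definition monotone_op (R : realType) (H : normedModType R)
  (ip : H -> H -> R) (A : H -> set H) : Prop :=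
  forall x y u v, A x u -> A y v -> 0 <= ip (x - y) (u - v).

Definition maximally_monotone (R : realType) (H : normedModType R)
  (ip : H -> H -> R) (A : H -> set H) : Prop :=
  monotone_op ip A /\
  forall A' : H -> set H, monotone_op ip A' ->
    (forall x, A x `<=` A' x) -> A' = A.

Definition monotone_fun (R : realType) (H : normedModType R)
  (ip : H -> H -> R) (B : H -> H) : Prop :=
  forall x y, 0 <= ip (x - y) (B x - B y).

Definition lipschitz_with (R : realType) (H : normedModType R)
  (L : R) (B : H -> H) : Prop :=
  forall x y, `|B x - B y| <= L * `|x - y|.

Definition cocoercive_inv (R : realType) (H : normedModType R)
  (ip : H -> H -> R) (L : R) (C : H -> H) : Prop :=
  forall x y, L^-1 * `|C x - C y| ^+ 2 <= ip (x - y) (C x - C y).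

(* p belongs to the (relational) resolvent J_{lam A} z = (I + lam A)^{-1} z,
   i.e. z ∈ p + lam A p. *)
Definition in_resolvent (R : realType) (H : normedModType R)
  (lam : R) (A : H -> set H) (z p : H) : Prop :=
  exists u, A p u /\ z = p + lam *: u.

Definition zero_ABC (R : realType) (H : normedModType R)
  (A : H -> set H) (B C : H -> H) (p : H) : Prop :=
  exists u, A p u /\ u + B p + C p = 0.

Definition weakly_converges (R : realType) (H : normedModType R)
  (ip : H -> H -> R) (x : nat -> H) (p : H) : Prop :=
  forall w : H, (fun k => ip (x k) w) @ \oo --> ip p w.

(* Main.v *)
Require Import Defs.
From HB Require Import structures.
From mathcomp Require Import all_boot all_order all_algebra.
From mathcomp Require Import all_classical all_reals all_analysis.
From mathcomp Require Import ring lra.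
Import Order.TTheory GRing.Theory Num.Theory.
Import numFieldNormedType.Exports.
Local Open Scope classical_set_scope.
Local Open Scope ring_scope.
Set Implicit Arguments. Unset Strict Implicit.

Lemma cauchy_lim (R : realType) (V : completeNormedModType R) (v : nat -> V) :
  (forall e, 0 < e -> exists N, forall n m, (N <= n)%N -> (N <= m)%N -> `|v n - v m| < e) ->
  exists l, forall e, 0 < e -> exists N, forall n, (N <= n)%N -> `|v n - l| < e.
Proof.
move=> hc.
have cv : cvg (v @ \oo).
  apply/cauchy_cvgP/cauchy_ballP => e e0.
  have [N hN] := hc e e0.
  exists ([set x | exists2 n, (N <= n)%N & v n = x], [set x | exists2 n, (N <= n)%N & v n = x]).
    by split; exists N => // n hn /=; exists n.
  move=> [a b] [/= [n hn <-] [m hm <-]].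
  by rewrite -ball_normE /ball_ /= hN.
exists (lim (v @ \oo)) => e e0.
have := (cvgrPdist_lt _ _).1 cv e e0.
move=> [N _ hN]; exists N => n hn.
by rewrite -normrN opprB; apply: hN.
Qed.

Lemma small_inv (R : realType) (t : R) : 0 < t -> exists N, forall n, (N <= n)%N -> (n.+1%:R)^-1 < t.
Proof.
move=> t0; have [k hk] := ltr_add_invr t0; exists k => n hn.
rewrite add0r in hk; apply: le_lt_trans hk.
by rewrite lef_pV2 ?posrE // ler_nat ltnS.
Qed.

Lemma min_exists (R : realType) (V : completeNormedModType R) (Q : V -> V -> R -> Prop) (k : R) :
  0 < k -> (exists v w c, Q v w c) -> (exists m0, forall v w c, Q v w c -> m0 <= c) ->
  (forall a1 a2 b1 b2 c1 c2, Q a1 a2 c1 -> Q b1 b2 c2 ->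
     exists c, Q (2^-1 *: (a1 + b1)) (2^-1 *: (a2 + b2)) c /\
       c <= (c1 + c2) / 2 - k * (`|a1 - b1| ^+ 2 + `|a2 - b2| ^+ 2)) ->
  exists vs ws m, (forall v w c, Q v w c -> m <= c) /\
    (forall e, 0 < e -> exists v w c, Q v w c /\ c <= m + e /\ `|v - vs| < e /\ `|w - ws| < e).
Proof.
move=> k0 [v0 [w0 [c0 hv0]]] [m0 hm0] hmid.
pose E := [set c | exists v w, Q v w c].
have hinf : has_inf E.
  split; first by exists c0, v0, w0.
  by exists m0 => c [v [w hv]]; exact: hm0 hv.
pose m := inf E.
have hm : forall v w c, Q v w c -> m <= c.
  by move=> v w c hv; apply: (ge_inf hinf.2); exists v, w.
have hseq : forall n : nat, exists p : V * V * R, Q p.1.1 p.1.2 p.2 /\ p.2 < m + (n.+1%:R)^-1.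
  move=> n; have hp : 0 < (n.+1%:R : R)^-1 by rewrite invr_gt0 ltr0Sn.
  have [c [v [w hv]] hc] := inf_adherent hp hinf.
  by exists (v, w, c).
have [f hf] := choice hseq.
have hcau : forall e, 0 < e -> exists N, forall n p, (N <= n)%N -> (N <= p)%N ->
    `|(f n).1.1 - (f p).1.1| < e /\ `|(f n).1.2 - (f p).1.2| < e.
  move=> e e0.
  have [N hN] := small_inv (mulr_gt0 k0 (mulr_gt0 e0 e0)).
  exists N => n p hn hp.
  have [hn1 hn2] := hf n; have [hp1 hp2] := hf p.
  have [c [hc1 hc2]] := hmid _ _ _ _ _ _ hn1 hp1.
  have := hm _ _ _ hc1.
  have i1 : (n.+1%:R)^-1 <= (N.+1%:R)^-1 :> R by rewrite lef_pV2 ?posrE // ler_nat ltnS.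
  have i2 : (p.+1%:R)^-1 <= (N.+1%:R)^-1 :> R by rewrite lef_pV2 ?posrE // ler_nat ltnS.
  have := hN N (leqnn N).
  have d0 := normr_ge0 ((f n).1.1 - (f p).1.1).
  have d0' := normr_ge0 ((f n).1.2 - (f p).1.2).
  move: hc2; set d := `|(f n).1.1 - (f p).1.1|; set d' := `|(f n).1.2 - (f p).1.2| => hc2.
  move=> hNN hmc.
  have : k * (d ^+ 2 + d' ^+ 2) < k * (e * e).
    move: hc2 hNN hmc i1 i2 hn2 hp2.
    move: (n.+1%:R^-1 : R) (p.+1%:R^-1 : R) (N.+1%:R^-1 : R) => a1 a2 a3.
    clearbody d d'; lra.
  rewrite ltr_pM2l // => hd.
  split; nra.
have [vs hvs] := cauchy_lim (fun e e0 => let: ex_intro N hN := hcau e e0 in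
   ex_intro _ N (fun n p hn hp => (hN n p hn hp).1)).
have [ws hws] := cauchy_lim (fun e e0 => let: ex_intro N hN := hcau e e0 in
   ex_intro _ N (fun n p hn hp => (hN n p hn hp).2)).
exists vs, ws, m; split => // e e0.
have [N1 hN1] := hvs e e0.
have [N3 hN3] := hws e e0.
have [N2 hN2] := small_inv e0.
pose M := maxn (maxn N1 N3) N2.
exists (f M).1.1, (f M).1.2, (f M).2.
have [h1 h2] := hf M.
have hM1 : (N1 <= M)%N by rewrite /M leq_max leq_max leqnn.
have hM3 : (N3 <= M)%N by rewrite /M leq_max leq_max leqnn orbT.
have hM2 : (N2 <= M)%N by rewrite /M leq_max leqnn orbT.
split => //; split.
  have := hN2 M hM2; move: h2.
  move: (M.+1%:R^-1 : R) => a; lra.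
by split; [apply: hN1|apply: hN3].
Qed.

Section IP.
Variables (R : realType) (H : completeNormedModType R) (ip : H -> H -> R).
Hypothesis hip : is_inner_product ip.

Lemma ipC x y : ip x y = ip y x.
Proof. by case: hip. Qed.
Lemma ipDl x y z : ip (x + y) z = ip x z + ip y z.
Proof. by case: hip => _ [h _]; have := h 1 x y z; rewrite scale1r mul1r. Qed.
Lemma ipZl a x z : ip (a *: x) z = a * ip x z.
Proof.
case: hip => _ [h _]; have := h a x 0 z; rewrite addr0 => ->.
have := h 0 x 0 z; rewrite scale0r addr0 mul0r add0r => h0.
suff -> : ip 0 z = 0 by rewrite addr0.
have := h 1 0 0 z; rewrite scaler0 addr0 mul1r => h1; lra.
Qed.
Lemma ipxx x : ip x x = `|x| ^+ 2.
Proof. by case: hip => _ []. Qed.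
Lemma ip0l z : ip 0 z = 0.
Proof. by rewrite -(scale0r 0) ipZl mul0r. Qed.
Lemma ipNl x z : ip (- x) z = - ip x z.
Proof. by rewrite -scaleN1r ipZl mulN1r. Qed.
Lemma ipBl x y z : ip (x - y) z = ip x z - ip y z.
Proof. by rewrite ipDl ipNl. Qed.
Lemma ipDr x y z : ip z (x + y) = ip z x + ip z y.
Proof. by rewrite ipC ipDl ipC (ipC y). Qed.
Lemma ipZr a x z : ip z (a *: x) = a * ip z x.
Proof. by rewrite ipC ipZl ipC. Qed.
Lemma ipNr x z : ip z (- x) = - ip z x.
Proof. by rewrite ipC ipNl ipC. Qed.
Lemma ipBr x y z : ip z (x - y) = ip z x - ip z y.
Proof. by rewrite ipDr ipNr. Qed.
Lemma ip0r z : ip z 0 = 0.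
Proof. by rewrite ipC ip0l. Qed.

Lemma normD2 x y : `|x + y| ^+ 2 = `|x| ^+ 2 + 2 * ip x y + `|y| ^+ 2.
Proof. rewrite -!ipxx ipDl !ipDr (ipC y x); ring. Qed.
Lemma normB2 x y : `|x - y| ^+ 2 = `|x| ^+ 2 - 2 * ip x y + `|y| ^+ 2.
Proof. by rewrite normD2 ipNr normrN; ring. Qed.

Lemma young x y (s : R) : 0 < s -> 2 * ip x y <= s * `|x| ^+ 2 + s^-1 * `|y| ^+ 2.
Proof.
move=> s0.
have := sqr_ge0 `|s *: x - y|; rewrite -[_ ^+ 2]/(`|s *: x - y| ^+ 2) normB2 normrZ ipZl exprMn gtr0_norm //.
move=> h.
have h2 : 0 <= s^-1 * (s ^+ 2 * `|x| ^+ 2 - 2 * (s * ip x y) + `|y| ^+ 2) by rewrite mulr_ge0 // invr_ge0 ltW.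
have e : s^-1 * (s ^+ 2 * `|x| ^+ 2 - 2 * (s * ip x y) + `|y| ^+ 2) = s * `|x| ^+ 2 - 2 * ip x y + s^-1 * `|y| ^+ 2.
  by field; rewrite gt_eqF.
rewrite e in h2; lra.
Qed.

Lemma CS x y : `|ip x y| <= `|x| * `|y|.
Proof.
have key : forall x y, ip x y <= `|x| * `|y|.
  move=> a b.
  have [a0|a0] := eqVneq `|a| 0.
    by move/normr0_eq0: a0 => ->; rewrite ip0l normr0 mul0r.
  have [b0|b0] := eqVneq `|b| 0.
    by move/normr0_eq0: b0 => ->; rewrite ip0r normr0 mulr0.
  have ap : 0 < `|a| by rewrite lt_def a0 normr_ge0.
  have bp : 0 < `|b| by rewrite lt_def b0 normr_ge0.
  have := young a b (divr_gt0 bp ap).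
  rewrite invf_div.
  have e1 : `|b| / `|a| * `|a| ^+ 2 = `|a| * `|b|.
    by rewrite expr2 mulrA divfK ?gt_eqF // mulrC.
  have e2 : `|a| / `|b| * `|b| ^+ 2 = `|a| * `|b|.
    by rewrite expr2 mulrA divfK ?gt_eqF.
  rewrite e1 e2; lra.
case: (lerP 0 (ip x y)) => h.
  by rewrite ger0_norm // key.
by rewrite ltr0_norm // -ipNl -normrN key.
Qed.


Lemma ipxx_ge0 x : 0 <= ip x x.
Proof. by rewrite ipxx sqr_ge0. Qed.

Lemma sqdiff (a b : H) : `|a| ^+ 2 - `|b| ^+ 2 = ip (a - b) (a + b).
Proof. rewrite -!ipxx ipBl !ipDr (ipC b a); ring. Qed.

Lemma conv_sq (a b : H) (t : R) : `|(1 - t) *: a + t *: b| ^+ 2 =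
  (1 - t) * `|a| ^+ 2 + t * `|b| ^+ 2 - t * (1 - t) * `|a - b| ^+ 2.
Proof.
rewrite -!ipxx !ipDl !ipDr !ipZl !ipZr !ipNl !ipNr (ipC b a); ring.
Qed.

Lemma mid_sq (a b : H) : `|2^-1 *: (a + b)| ^+ 2 =
  (`|a| ^+ 2 + `|b| ^+ 2) / 2 - `|a - b| ^+ 2 / 4.
Proof.
rewrite -!ipxx !ipZl !ipZr !ipDl !ipDr !ipNl !ipNr (ipC b a); field; by rewrite ?pnatr_eq0.
Qed.

Lemma le_eps (a b K : R) : (forall e, 0 < e -> e < 1 -> a <= b + e * K) -> a <= b.
Proof.
move=> h; apply/ler_addgt0Pr => e e0.
have K1 : 0 < `|K| + 1 by rewrite ltr_pwDr // normr_ge0.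
pose d := Num.min (2^-1) (e / (`|K| + 1)).
have d0 : 0 < d by rewrite lt_min invr_gt0 ltr0n divr_gt0.
have d1 : d < 1 by rewrite gt_min; apply/orP; left; rewrite invf_lt1 // ltr1n.
have := h d d0 d1.
have : d * K <= e.
  apply: le_trans (ler_norm _) _; rewrite normrM gtr0_norm //.
  have : d <= e / (`|K| + 1) by rewrite ge_min lexx orbT.
  rewrite ler_pdivlMr // => hd.
  apply: le_trans _ hd; rewrite ler_pM2l // lerDl //.
lra.
Qed.

Definition Phi (y v x u : H) := ip x v + ip y u - ip y v + (`|x| ^+ 2 + `|u| ^+ 2) / 2.

Lemma minty0 (G : H -> H -> Prop) :
  (forall x y u v, G x u -> G y v -> 0 <= ip (x - y) (u - v)) ->
  (forall x u, (forall y v, G y v -> 0 <= ip (x - y) (u - v)) -> G x u) ->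
  exists x, G x (- x).
Proof.
move=> mon max.
have [y0 [v0 g0]] : exists y v, G y v.
  case: (pselect (exists y v, G y v)) => // hn.
  exists 0, 0; apply: max => y v g; exfalso; apply: hn; by exists y, v.
pose Q x u c := forall y v, G y v -> Phi y v x u <= c.
have PhiG : forall y v x u, G y v -> G x u -> Phi y v x u <= ip x u + (`|x| ^+ 2 + `|u| ^+ 2) / 2.
  move=> y v x u gy gx; have := mon _ _ _ _ gx gy.
  rewrite /Phi !ipBl !ipBr => h; lra.
have Fq : forall x u c, Q x u c -> ip x u + (`|x| ^+ 2 + `|u| ^+ 2) / 2 <= c.
  move=> x u c hQ; rewrite leNgt; apply/negP => hc.
  have gx : G x u.
    apply: max => y v gy; have := hQ y v gy.
    rewrite /Phi !ipBl !ipBr (ipC y u) => h; lra.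
  by have := hQ x u gx; rewrite /Phi; lra.
have q0 : forall x u, 0 <= ip x u + (`|x| ^+ 2 + `|u| ^+ 2) / 2.
  move=> x u; have := sqr_ge0 `|x + u|; rewrite normD2; lra.
have [xs [us [m [hm hclose]]]] := @min_exists R H Q (8^-1) ltac:(by rewrite invr_gt0 ltr0n)
  ltac:(exists y0, v0, (ip y0 v0 + (`|y0| ^+ 2 + `|v0| ^+ 2) / 2) => y v g; exact: PhiG)
  ltac:(exists 0 => x u c hQ; have := Fq _ _ _ hQ; have := q0 x u; lra)
  ltac:(move=> a1 a2 b1 b2 c1 c2 h1 h2;
    exists ((c1 + c2) / 2 - 8^-1 * (`|a1 - b1| ^+ 2 + `|a2 - b2| ^+ 2)); split => // y v g;
    have := h1 y v g; have := h2 y v g; rewrite /Phi !mid_sq !ipZl !ipZr !ipDl !ipDr; lra).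
have Qs : Q xs us m.
  move=> y v g.
  apply: (@le_eps _ _ (2 + `|v| + `|y| + `|xs| + `|us|)) => e e0 e1.
  have [x [u [c [hQ [hc [hx hu]]]]]] := hclose e e0.
  have h := hQ y v g.
  have d1 : ip xs v - ip x v <= e * `|v|.
    rewrite -ipBl; apply: le_trans (ler_norm _) _; apply: le_trans (CS _ _) _.
    by rewrite -normrN opprB ler_wpM2r // ltW.
  have d2 : ip y us - ip y u <= e * `|y|.
    rewrite -ipBr; apply: le_trans (ler_norm _) _; apply: le_trans (CS _ _) _.
    by rewrite mulrC -normrN opprB ler_wpM2r // ltW.
  have d3 : forall a b : H, `|b - a| < e -> `|a| ^+ 2 - `|b| ^+ 2 <= e * (2 * `|a| + 1).
    move=> a b hab; rewrite sqdiff; apply: le_trans (ler_norm _) _; apply: le_trans (CS _ _) _.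
    rewrite -normrN opprB; apply: ler_pM; [exact: normr_ge0|exact: normr_ge0|exact: ltW|].
    have := ler_normD a b.
    have : `|b| <= `|a| + e.
      have := ler_normD a (b - a); rewrite addrC subrK; lra.
    lra.
  have := d3 _ _ hx; have := d3 _ _ hu.
  rewrite /Phi in h *; lra.
have opt : forall y v, G y v -> ip xs us + `|xs| ^+ 2 + `|us| ^+ 2 <= ip y v + ip xs y + ip us v.
  move=> y v g.
  have Fs := Fq _ _ _ Qs.
  suff : m <= ip y v + (`|y| ^+ 2 + `|v| ^+ 2) / 2 - (`|xs - y| ^+ 2 + `|us - v| ^+ 2) / 2.
    rewrite !normB2; lra.
  apply: (@le_eps _ _ ((`|xs - y| ^+ 2 + `|us - v| ^+ 2) / 2)) => t t0 t1.
  pose c := (1 - t) * m + t * (ip y v + (`|y| ^+ 2 + `|v| ^+ 2) / 2)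
    - t * (1 - t) * (`|xs - y| ^+ 2 + `|us - v| ^+ 2) / 2.
  have hQt : Q ((1 - t) *: xs + t *: y) ((1 - t) *: us + t *: v) c.
    move=> y' v' g'.
    have h1 := Qs y' v' g'. have h2 := PhiG y' v' y v g' g.
    rewrite /Phi !conv_sq !ipDl !ipDr !ipZl !ipZr in h1 h2 *.
    rewrite /c.
    have tt : 0 <= t * (1 - t) by rewrite mulr_ge0 ?ltW // subr_gt0.
    nra.
  have := hm _ _ _ hQt; rewrite /c => hmc.
  have : t * m <= t * (ip y v + (`|y| ^+ 2 + `|v| ^+ 2) / 2 - (`|xs - y| ^+ 2 + `|us - v| ^+ 2) / 2
     + t * ((`|xs - y| ^+ 2 + `|us - v| ^+ 2) / 2)).
    lra.
  by rewrite ler_pM2l //; lra.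
have key : forall y v, G y v -> `|xs + us| ^+ 2 <= ip ((- us) - y) ((- xs) - v).
  move=> y v g; have := opt y v g.
  rewrite normD2 !ipBl !ipBr !ipNl !ipNr (ipC us xs) (ipC y xs); lra.
have gm : G (- us) (- xs).
  apply: max => y v g; apply: le_trans (key y v g); exact: sqr_ge0.
have := key _ _ gm; rewrite !subrr ip0l => h0.
have : xs + us = 0.
  apply/normr0_eq0; apply/eqP; rewrite -sqrf_eq0 eq_le sqr_ge0 andbT; exact: h0.
move=> e; have hu : us = - xs by apply/eqP; rewrite -addr_eq0 addrC e.
by exists xs; rewrite hu opprK in gm.
Qed.

End IP.

Lemma sq_le (R : realType) (a e : R) : 0 <= a -> 0 <= e -> a ^+ 2 <= e ^+ 2 -> a <= e.
Proof. move=> a0 e0 h; rewrite leNgt; apply/negP => h2; nra. Qed.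

Lemma pick_eta (R : realType) (K e : R) : 0 <= K -> 0 < e ->
  exists eta, 0 < eta /\ eta <= 1 /\ eta * K <= e.
Proof.
move=> K0 e0; have K1 : 0 < K + 1 by lra.
exists (Num.min 1 (e / (K + 1))); split; first by rewrite lt_min ltr01 divr_gt0.
split; first by rewrite ge_min lexx.
have hm : Num.min 1 (e / (K + 1)) <= e / (K + 1) by rewrite ge_min lexx orbT.
apply: le_trans (ler_wpM2r K0 hm) _.
rewrite mulrAC ler_pdivrMr //; nra.
Qed.

Lemma le_of_eps (R : realType) (a b : R) : (forall e, 0 < e -> a <= b + e) -> a <= b.
Proof. by move=> h; apply/ler_addgt0Pr. Qed.


Section Gen.
Variables (R : realType) (H : completeNormedModType R) (ip : H -> H -> R).
Hypothesis hip : is_inner_product ip.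

Let ipC := ipC hip.
Let ipDl := ipDl hip. Let ipDr := ipDr hip. Let ipZl := ipZl hip. Let ipZr := ipZr hip.
Let ipNl := ipNl hip. Let ipNr := ipNr hip. Let ipBl := ipBl hip. Let ipBr := ipBr hip.
Let ip0l := ip0l hip. Let ip0r := ip0r hip. Let normB2 := normB2 hip. Let normD2 := normD2 hip.
Let CS := CS hip. Let ipxx := ipxx hip. Let mid_sq := mid_sq hip.

Lemma maxpt (A : H -> set H) : maximally_monotone ip A ->
  forall x u, (forall y v, A y v -> 0 <= ip (x - y) (u - v)) -> A x u.
Proof.
move=> [mon mx] x u h.
pose A' := fun y => A y `|` [set w | y = x /\ w = u].
have mon' : monotone_op ip A'.
  move=> x1 x2 u1 u2 [h1|[-> ->]] [h2|[-> ->]].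
  - exact: mon h1 h2.
  - by rewrite -(opprB x) -(opprB u) ipNl ipNr opprK; exact: h.
  - exact: h.
  - by rewrite !subrr ip0l.
have e := mx A' mon' (fun y w hw => or_introl hw).
have : A' x u by right.
by rewrite e.
Qed.

Lemma resolvent_ex (A : H -> set H) (lam : R) (z : H) :
  maximally_monotone ip A -> 0 < lam -> exists p, A p (lam^-1 *: (z - p)).
Proof.
move=> hA l0.
pose G x w := A (x + z) (lam^-1 *: w).
have li : 0 < lam^-1 by rewrite invr_gt0.
have monG : forall x1 x2 u1 u2, G x1 u1 -> G x2 u2 -> 0 <= ip (x1 - x2) (u1 - u2).
  move=> x1 x2 u1 u2 h1 h2; have := hA.1 _ _ _ _ h1 h2.
  have -> : x1 + z - (x2 + z) = x1 - x2.
    by rewrite opprD addrACA addrN addr0.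
  by rewrite -scalerBr ipZr pmulr_rge0.
have maxG : forall x w, (forall y v, G y v -> 0 <= ip (x - y) (w - v)) -> G x w.
  move=> x w h; apply: (maxpt hA) => y' a ha.
  have g : G (y' - z) (lam *: a) by rewrite /G subrK scalerA mulVf ?gt_eqF // scale1r.
  have := h _ _ g.
  have -> : x - (y' - z) = x + z - y' by rewrite opprB addrA (addrAC x).
  have -> : w - lam *: a = lam *: (lam^-1 *: w - a).
    by rewrite scalerBr scalerA mulfV ?gt_eqF // scale1r.
  by rewrite ipZr pmulr_rge0.
have [x hx] := minty0 hip monG maxG.
exists (x + z); move: hx; rewrite /G.
by have -> : z - (x + z) = - x by rewrite opprD addrCA subrr addr0.
Qed.

Lemma zero_from_var (A : H -> set H) (D : H -> H) (L : R) (q : H) :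
  maximally_monotone ip A -> 0 <= L -> (forall a b, `|D a - D b| <= L * `|a - b|) ->
  (forall y a, A y a -> 0 <= ip (q - y) (- a - D y)) -> A q (- D q).
Proof.
move=> hA L0 hD h.
have L1 : 0 < L + 1 by rewrite ltr_wpDl.
pose mu := (L + 1)^-1.
have mu0 : 0 < mu by rewrite invr_gt0.
have [p hp] := resolvent_ex (q - mu *: D q) hA mu0.
have ea : mu^-1 *: (q - mu *: D q - p) = mu^-1 *: (q - p) - D q.
  rewrite -addrA (addrC (- (mu *: D q))) addrA scalerDr scalerN scalerA mulVf ?gt_eqF //.
  by rewrite scale1r.
rewrite ea in hp.
have := h _ _ hp.
rewrite opprB !ipBr ipZr ipxx /mu invrK => hh.
have hc := CS (q - p) (D q - D p); rewrite ipBr in hc.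
have hb := hD q p. have a0 := normr_ge0 (q - p).
have hc2 : ip (q - p) (D q) - ip (q - p) (D p) <= `|q - p| * (L * `|q - p|).
  by apply: le_trans (ler_norm _) (le_trans hc _); rewrite ler_wpM2l.
have a00 : `|q - p| = 0 by nra.
have pq : p = q.
  by apply/eqP; rewrite eq_sym -subr_eq0 -normr_eq0; apply/eqP.
by move: hp; rewrite pq subrr scaler0 add0r.
Qed.

Section Center.
Variables (y : nat -> H) (M : R).
Hypothesis hM : forall k, `|y k| <= M.

Definition ub (P : nat -> Prop) (v : H) (c : R) :=
  forall e, 0 < e -> exists N, forall k, (N <= k)%N -> P k -> `|y k - v| ^+ 2 <= c + e.
Definition infinite (P : nat -> Prop) := forall N, exists2 k, (N <= k)%N & P k.
Definition convsq (v : H) (rho : R) :=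
  forall e, 0 < e -> exists N, forall k, (N <= k)%N -> `| `|y k - v| ^+ 2 - rho| <= e.

Lemma ub_mid P a b c1 c2 : ub P a c1 -> ub P b c2 ->
  ub P (2^-1 *: (a + b)) ((c1 + c2) / 2 - `|a - b| ^+ 2 / 4).
Proof.
move=> h1 h2 e e0.
have [N1 hN1] := h1 e e0; have [N2 hN2] := h2 e e0.
exists (maxn N1 N2) => k hk Pk.
have k1 : (N1 <= k)%N by move: hk; rewrite geq_max => /andP[].
have k2 : (N2 <= k)%N by move: hk; rewrite geq_max => /andP[].
have yy : 2^-1 *: (y k + y k) = y k.
  by rewrite -mulr2n -[y k *+ 2]scaler_nat scalerA mulVf ?pnatr_eq0 // scale1r.
have id : y k - 2^-1 *: (a + b) = 2^-1 *: ((y k - a) + (y k - b)).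
  by rewrite addrACA -opprD scalerBr yy.
have id2 : (y k - a) - (y k - b) = b - a.
  by rewrite opprB addrC addrA subrK.
rewrite id mid_sq id2 (distrC b a).
have := hN1 k k1 Pk; have := hN2 k k2 Pk; lra.
Qed.

Lemma ub_ge0 P v c : infinite P -> ub P v c -> 0 <= c.
Proof.
move=> iP h; apply: le_of_eps => e e0.
have [N hN] := h e e0; have [k hk Pk] := iP N.
by apply: le_trans (hN k hk Pk); exact: sqr_ge0.
Qed.

Lemma ub_of_conv P v rho : convsq v rho -> ub P v rho.
Proof.
move=> h e e0; have [N hN] := h e e0; exists N => k hk _.
have := hN k hk; rewrite ler_norml => /andP[_ h2]; lra.
Qed.

Lemma conv_le_ub P v rho c : infinite P -> convsq v rho -> ub P v c -> rho <= c.
Proof.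
move=> iP h1 h2; apply: le_of_eps => e e0.
have e20 : 0 < e / 2 by rewrite divr_gt0.
have [N1 hN1] := h1 _ e20; have [N2 hN2] := h2 _ e20.
have [k hk Pk] := iP (maxn N1 N2).
have k1 : (N1 <= k)%N by move: hk; rewrite geq_max => /andP[].
have k2 : (N2 <= k)%N by move: hk; rewrite geq_max => /andP[].
have := hN1 k k1; rewrite ler_norml => /andP[h3 _].
have := hN2 k k2 Pk; lra.
Qed.

Lemma ub_mono P v c c' : ub P v c -> c <= c' -> ub P v c'.
Proof.
move=> h hc e e0; have [N hN] := h e e0; exists N => k hk Pk.
by apply: le_trans (hN k hk Pk) _; rewrite lerD2r.
Qed.

Lemma center_ex P : infinite P ->
  exists vs m, (forall v c, ub P v c -> m <= c) /\ ub P vs m.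
Proof.
move=> iP.
pose Q (v w : H) c := w = 0 /\ ub P v c.
have M0 : 0 <= M by apply: le_trans (hM 0%N); exact: normr_ge0.
have [vs [ws [m [hm hcl]]]] := @min_exists R H Q (4^-1) ltac:(by rewrite invr_gt0 ltr0n)
  ltac:(exists 0, 0, (M ^+ 2); split => // e e0; exists 0%N => k _ _;
        rewrite subr0; have := hM k; have := normr_ge0 (y k); nra)
  ltac:(exists 0 => v w c [_ h]; exact: ub_ge0 iP h)
  ltac:(move=> a1 a2 b1 b2 c1 c2 [-> h1] [-> h2];
        exists ((c1 + c2) / 2 - `|a1 - b1| ^+ 2 / 4); split;
        [split; [by rewrite addr0 scaler0 | exact: ub_mid] | rewrite subr0 normr0; lra]).
exists vs, m; split; first by move=> v c h; apply: (hm v 0); split.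
move=> e e0.
pose K := 2 * (M + `|vs| + 1) + 3.
have K0 : 0 <= K by rewrite /K; have := normr_ge0 vs; lra.
have e20 : 0 < e / 2 by rewrite divr_gt0.
have [eta [eta0 [eta1 hK]]] := pick_eta K0 e20.
have [v [w [c [[_ hQ] [hc [hv _]]]]]] := hcl eta eta0.
have [N hN] := hQ eta eta0.
exists N => k hk Pk.
have h1 := hN k hk Pk.
have h2 : `|y k - vs| <= `|y k - v| + eta.
  have := ler_normD (y k - v) (v - vs); rewrite addrA subrK; lra.
have h3 : `|y k - v| <= M + `|vs| + 1.
  have := ler_normD (y k) (- v); rewrite normrN.
  have := ler_normD vs (v - vs); rewrite addrC subrK.
  have := hM k; lra.
have := normr_ge0 (y k - vs); have := normr_ge0 (y k - v).
move: h1 h2 h3 hK; rewrite /K.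
move: (`|y k - vs|) (`|y k - v|) => a b h1 h2 h3 hK a0 b0.
have hb : 2 * eta * b <= 2 * eta * (M + `|vs| + 1).
  by apply: ler_wpM2l => //; rewrite mulr_ge0 // ltW.
have : a ^+ 2 <= b ^+ 2 + 2 * eta * b + eta * eta by nra.
have : eta * eta <= eta by rewrite -{3}(mulr1 eta) ler_pM2l.
lra.
Qed.

Lemma halfspace P vs m : infinite P -> (forall v c, ub P v c -> m <= c) -> ub P vs m ->
  forall t beta, (forall e, 0 < e -> exists N, forall k, (N <= k)%N -> P k -> beta - e <= ip (y k) t) ->
  beta <= ip vs t.
Proof.
move=> iP hm hvs t beta hb.
rewrite leNgt; apply/negP => hlt.
have [t0|tn] := eqVneq t 0.
  move: hlt; rewrite t0 ip0r => b0.
  have b20 : 0 < beta / 2 by rewrite divr_gt0.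
  have [N hN] := hb _ b20; have [k hk Pk] := iP N.
  by have := hN k hk Pk; rewrite t0 ip0r; lra.
pose delta := beta - ip vs t.
have d0 : 0 < delta by rewrite /delta subr_gt0.
pose tau := `|t| ^+ 2.
have tau0 : 0 < tau by rewrite /tau exprn_gt0 // normr_gt0.
pose s := delta / tau.
have s0 : 0 < s by rewrite divr_gt0.
have st : s * tau = delta by rewrite /s divfK ?gt_eqF.
pose d := vs + s *: t.
have hd : forall e, 0 < e -> ub P d (m - s * delta + (2 * s + 1) * e).
  move=> e e0 e' e'0.
  have [N1 hN1] := hvs e e0; have [N2 hN2] := hb e e0.
  exists (maxn N1 N2) => k hk Pk.
  have k1 : (N1 <= k)%N by move: hk; rewrite geq_max => /andP[].
  have k2 : (N2 <= k)%N by move: hk; rewrite geq_max => /andP[].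
  have -> : y k - d = (y k - vs) - s *: t by rewrite /d opprD addrA.
  rewrite normB2 ipZr ipBl normrZ exprMn gtr0_norm //.
  have := hN1 k k1 Pk; have := hN2 k k2 Pk.
  have e1 : s ^+ 2 * `|t| ^+ 2 = s * delta by rewrite -st /tau; ring.
  rewrite e1 /delta.
  move: (ip (y k) t) (ip vs t) (`|y k - vs| ^+ 2) => p q r h1 h2.
  have : s * (beta - e) <= s * p by rewrite ler_wpM2l // ltW.
  lra.
have : s * delta <= 0.
  apply: (@le_eps _ _ _ (2 * s + 1)) => e e0 e1.
  have := hm _ _ (hd e e0); lra.
have := mulr_gt0 s0 d0; lra.
Qed.

Lemma opial_main P c m t e (Z : H -> Prop) :
  (forall P vs m, infinite P -> (forall v c, ub P v c -> m <= c) -> ub P vs m -> Z vs) ->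
  (forall z, Z z -> exists rho, convsq z rho) ->
  (forall v c', ub (fun _ => True) v c' -> m <= c') -> ub (fun _ => True) c m ->
  infinite P -> 0 < e -> (forall k, P k -> ip c t + e <= ip (y k) t) -> False.
Proof.
move=> Zc Zf hm hc iP e0 hP.
have infT : infinite (fun _ => True) by move=> N; exists N.
have Zc0 : Z c := Zc _ _ _ infT hm hc.
have [c' [m' [hm' hc']]] := center_ex iP.
have Zc' : Z c' := Zc _ _ _ iP hm' hc'.
have hs : ip c t + e <= ip c' t.
  apply: (halfspace iP hm' hc') => e' e'0; exists 0%N => k _ Pk.
  have := hP k Pk; lra.
have [rho hrho] := Zf c Zc0; have [rho' hrho'] := Zf c' Zc'.
have i1 := conv_le_ub infT hrho hc.
have i2 := hm c' rho' (ub_of_conv _ hrho').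
have i3 := conv_le_ub iP hrho' hc'.
have i4 := hm' c rho (ub_of_conv _ hrho).
have hc'm : ub (fun _ => True) c' m by apply: ub_mono (ub_of_conv _ hrho') _; lra.
have := hm _ _ (ub_mid hc hc'm).
have := sqr_ge0 `|c - c'|.
move=> h1 h2.
have hcc : `|c - c'| ^+ 2 = 0 by lra.
have : c = c'.
  by apply/eqP; rewrite -subr_eq0 -normr_eq0 -sqrf_eq0; apply/eqP.
move=> ecc; rewrite -ecc in hs; lra.
Qed.

Lemma opial (Z : H -> Prop) :
  (forall P vs m, infinite P -> (forall v c, ub P v c -> m <= c) -> ub P vs m -> Z vs) ->
  (forall z, Z z -> exists rho, convsq z rho) ->
  exists p, Z p /\ forall w e, 0 < e -> exists N, forall k, (N <= k)%N -> `|ip (y k) w - ip p w| <= e.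
Proof.
move=> Zc Zf.
have infT : infinite (fun _ => True) by move=> N; exists N.
have [c [m [hm hc]]] := center_ex infT.
exists c; split; first exact: Zc _ _ _ infT hm hc.
move=> w e e0.
case: (pselect (exists N, forall k, (N <= k)%N -> `|ip (y k) w - ip c w| <= e)) => // hn.
exfalso.
have hi : forall N, exists2 k, (N <= k)%N & e < `|ip (y k) w - ip c w|.
  move=> N; case: (pselect (exists2 k, (N <= k)%N & e < `|ip (y k) w - ip c w|)) => // hn2.
  exfalso; apply: hn; exists N => k hk; rewrite leNgt; apply/negP => hlt.
  by apply: hn2; exists k.
pose P1 k := e <= ip (y k) w - ip c w.
case: (pselect (infinite P1)) => [i1|n1].
  apply: (@opial_main P1 c m w e Z Zc Zf hm hc i1 e0) => k; rewrite /P1; lra.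
have [N0 hN0] : exists N0, forall k, (N0 <= k)%N -> ~ P1 k.
  case: (pselect (exists N0, forall k, (N0 <= k)%N -> ~ P1 k)) => // hn3.
  exfalso; apply: n1 => N; case: (pselect (exists2 k, (N <= k)%N & P1 k)) => // hn4.
  exfalso; apply: hn3; exists N => k hk Pk; apply: hn4; by exists k.
pose P2 k := ip (y k) w - ip c w <= - e.
have i2 : infinite P2.
  move=> N; have [k hk hke] := hi (maxn N N0).
  have k1 : (N <= k)%N by move: hk; rewrite geq_max => /andP[].
  have k2 : (N0 <= k)%N by move: hk; rewrite geq_max => /andP[].
  exists k => //; have := hN0 k k2; rewrite /P1 /P2 => hp.
  move: hke; rewrite ltr_normr => /orP[h|h]; last lra.
  by exfalso; apply: hp; rewrite ltW.
apply: (@opial_main P2 c m (- w) e Z Zc Zf hm hc i2 e0) => k; rewrite /P2 !ipNr; lra.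
Qed.

End Center.

End Gen.

Section Alg.
Variables (R : realType) (H : completeNormedModType R) (ip : H -> H -> R).
Variables (A : H -> set H) (B C : H -> H) (L1 L2 lam : R) (y : nat -> H).
Hypotheses (hip : is_inner_product ip) (hA : maximally_monotone ip A)
  (hB : monotone_fun ip B) (hL1 : 0 <= L1) (hBL : lipschitz_with L1 B)
  (hL2 : 0 < L2) (hC : cocoercive_inv ip L2 C) (hlam : 0 < lam)
  (hlam2 : lam < 2 / (4 * L1 + L2)).
Hypothesis hy : forall k, in_resolvent lam A
  (y k.+1 - (2 * lam) *: B (y k.+1) + lam *: B (y k) - lam *: C (y k.+1)) (y k.+2).

Let ipC := ipC hip.
Let ipDl := ipDl hip. Let ipDr := ipDr hip. Let ipZl := ipZl hip. Let ipZr := ipZr hip.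
Let ipNl := ipNl hip. Let ipNr := ipNr hip. Let ipBl := ipBl hip. Let ipBr := ipBr hip.
Let ip0l := ip0l hip. Let ip0r := ip0r hip. Let normB2 := normB2 hip. Let normD2 := normD2 hip.
Let CS := CS hip.

Lemma Amono x1 x2 u1 u2 : A x1 u1 -> A x2 u2 -> 0 <= ip (x1 - x2) (u1 - u2).
Proof. by move=> h1 h2; exact: hA.1. Qed.

Lemma ipB_le (p q r : H) : ip p (B q - B r) <= `|p| * (L1 * `|q - r|).
Proof.
apply: le_trans (ler_norm _) _; apply: le_trans (CS _ _) _.
by apply: ler_wpM2l => //; exact: hBL.
Qed.

Lemma C_lip (q r : H) : `|C q - C r| <= L2 * `|q - r|.
Proof.
have h := hC q r.
have := CS (q - r) (C q - C r).
set w := `|C q - C r|; set d := `|q - r| => h2.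
have w0 : 0 <= w by exact: normr_ge0.
have d0 : 0 <= d by exact: normr_ge0.
have h3 : L2^-1 * w ^+ 2 <= d * w by apply: le_trans h (le_trans (ler_norm _) h2).
have h4 : w ^+ 2 <= L2 * (d * w).
  by have := ler_wpM2l (ltW hL2) h3; rewrite mulrA mulfV ?gt_eqF // mul1r.
case: (eqVneq w 0) => [->|wn]; first by rewrite mulr_ge0 // ltW.
have wp : 0 < w by rewrite lt_def wn w0.
by rewrite -(ler_pM2r wp) -mulrA -expr2.
Qed.

Definition W (z : H) k := `|y k.+1 - z| ^+ 2 - 2 * lam * ip (B (y k.+1) - B (y k)) (y k.+1 - z)
  + lam * L1 * `|y k.+1 - y k| ^+ 2.

Lemma lyap_step z az k : A z az -> az + B z + C z = 0 ->
  W z k.+1 <= W z k - (1 - lam * (4 * L1 + L2) / 2) * `|y k.+2 - y k.+1| ^+ 2.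
Proof.
move=> Az ez.
have [u [Au eq]] := hy k.
rewrite /W.
move: eq Au.
set a := y k.+2; set b := y k.+1; set c := y k.
move=> eq Au.
set P := a - z.
have m1 : 0 <= lam * (ip P u - ip P az).
  apply: mulr_ge0; first exact: ltW.
  rewrite -ipBr; exact: Amono.
have m2 : 0 <= lam * (ip P (B a) - ip P (B z)).
  apply: mulr_ge0; first exact: ltW.
  rewrite -ipBr; exact: hB.
have E1 := congr1 (ip P) eq.
rewrite !ipDr !ipNr !ipZr in E1.
have E2 := congr1 (ip P) ez; rewrite !ipDr ip0r in E2.
have E2' : lam * ip P az = lam * (- ip P (B z) - ip P (C z)).
  by congr (_ * _); lra.
have G0 : 0 <= ip P (b - a) + lam * ip P (B a - B b) - lam * ip P (B b - B c)
    - lam * ip P (C b - C z).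
  rewrite !ipBr; lra.
have G1 : 2 * ip P (b - a) = `|b - z| ^+ 2 - `|a - z| ^+ 2 - `|a - b| ^+ 2.
  have -> : b - a = (b - z) - P by rewrite /P opprB addrA subrK.
  have -> : a - b = P - (b - z) by rewrite /P opprB addrA subrK.
  rewrite (normB2 P (b - z)) ipBr (ipC P (b - z)) -!(ipxx hip); lra.
have Pd : P = (b - z) + (a - b) by rewrite addrC addrA subrK.
have G2 : lam * ip P (B b - B c) = lam * ip (B b - B c) (b - z) + lam * ip (a - b) (B b - B c).
  by rewrite Pd ipDl (ipC (b - z)) mulrDr.
have G3 : - (lam * L1 / 2 * (`|a - b| ^+ 2 + `|b - c| ^+ 2)) <= lam * ip (a - b) (B b - B c).
  have := ipB_le (- (a - b)) b c; rewrite ipNl normrN.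
  have := sqr_ge0 (`|a - b| - `|b - c|).
  move: (`|a - b|) (`|b - c|) => p q h2 h1.
  have h3 : p * q <= (p ^+ 2 + q ^+ 2) / 2 by lra.
  have lL : 0 <= lam * L1 by rewrite mulr_ge0 // ltW.
  have h4 := ler_wpM2l lL h3.
  have h5 := ler_wpM2l (ltW hlam) h1.
  move: (ip (a - b) (B b - B c)) h4 h5 => r h4 h5.
  have e1 : lam * (p * (L1 * q)) = lam * L1 * (p * q) by ring.
  have e2 : lam * L1 / 2 * (p ^+ 2 + q ^+ 2) = lam * L1 * ((p ^+ 2 + q ^+ 2) / 2) by field.
  rewrite e2; rewrite e1 in h5; lra.
have G4 : lam * ip P (C b - C z) = lam * ip (b - z) (C b - C z) + lam * ip (a - b) (C b - C z).
  by rewrite Pd ipDl mulrDr.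
have G5 : - (lam * L2 / 4 * `|a - b| ^+ 2) <= lam * ip (b - z) (C b - C z) + lam * ip (a - b) (C b - C z).
  have F5 := hC b z.
  have F6 : - ip (a - b) (C b - C z) <= `|a - b| * `|C b - C z|.
    rewrite -ipNl; apply: le_trans (ler_norm _) _; apply: le_trans (CS _ _) _.
    by rewrite normrN.
  move: F5 F6; move: (`|a - b|) (`|C b - C z|) => d w F5 F6.
  have F7 : 0 <= L2^-1 * w ^+ 2 - w * d + L2 / 4 * d ^+ 2.
    have iL : 0 <= L2^-1 by rewrite invr_ge0 ltW.
    have := mulr_ge0 iL (sqr_ge0 (w - L2 * d / 2)).
    have -> // : L2^-1 * (w - L2 * d / 2) ^+ 2 = L2^-1 * w ^+ 2 - w * d + L2 / 4 * d ^+ 2.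
    by field; rewrite gt_eqF.
  move: (ip (b - z) (C b - C z)) (ip (a - b) (C b - C z)) F5 F6 F7 => r1 r2 F5 F6 F7.
  have : - (L2 / 4 * d ^+ 2) <= r1 + r2 by lra.
  move/(ler_wpM2l (ltW hlam)).
  have -> : lam * - (L2 / 4 * d ^+ 2) = - (lam * L2 / 4 * d ^+ 2) by ring.
  by rewrite mulrDr.
have G6 : lam * ip P (B a - B b) = lam * ip (B a - B b) (a - z) by rewrite ipC.
have hL : 0 <= lam * L2 by rewrite mulr_ge0 // ltW.
lra.
Qed.

Lemma lam_facts : 0 < 1 - lam * (4 * L1 + L2) / 2 /\ lam * L1 < 2^-1.
Proof.
have d0 : 0 < 4 * L1 + L2.
  have h1 : 0 <= L1 by exact: hL1.
  have h2 : 0 < L2 by exact: hL2.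
  lra.
have := hlam2; rewrite ltr_pdivlMr // => h.
have : 0 <= lam * L1 by rewrite mulr_ge0 // ltW.
have : 0 < lam * L2 by rewrite mulr_gt0.
move=> h1 h2; split; lra.
Qed.

Lemma W_lb z k : (1 - lam * L1) * `|y k.+1 - z| ^+ 2 <= W z k.
Proof.
rewrite /W.
have := ipB_le (y k.+1 - z) (y k.+1) (y k); rewrite ipC.
move: (`|y k.+1 - z|) (`|y k.+1 - y k|) (ip (B (y k.+1) - B (y k)) (y k.+1 - z)) => p q r h.
have h3 : p * q <= (p ^+ 2 + q ^+ 2) / 2 by have := sqr_ge0 (p - q); lra.
have lL : 0 <= lam * L1 by rewrite mulr_ge0 // ltW.
have h4 := ler_wpM2l lL h3.
have h5 := ler_wpM2l (ltW hlam) h.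
have e1 : lam * (p * (L1 * q)) = lam * L1 * (p * q) by ring.
rewrite e1 in h5; lra.
Qed.

Lemma W_noninc z az : A z az -> az + B z + C z = 0 -> forall k n, (k <= n)%N -> W z n <= W z k.
Proof.
move=> Az ez k n kn; rewrite -(subnKC kn); elim: (n - k)%N => [|j IH]; first by rewrite addn0.
rewrite addnS; apply: le_trans IH.
have := lyap_step k.+1 Az ez.
case: lam_facts => d0 _.
have := sqr_ge0 `|y (k + j).+2 - y (k + j).+1|.
have := lyap_step (k + j) Az ez.
move: (W z (k + j).+1) (W z (k + j)) (`|y (k + j).+2 - y (k + j).+1| ^+ 2) => p q r.
by move=> h1 h2 _; nra.
Qed.

Lemma fejer z az : A z az -> az + B z + C z = 0 ->
  [/\ exists M, forall k, `|y k.+1 - z| <= M,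
      (forall e, 0 < e -> exists N, forall k, (N <= k)%N -> `|y k.+1 - y k| <= e) &
      exists rho, forall e, 0 < e -> exists N, forall k, (N <= k)%N ->
        `| `|y k - z| ^+ 2 - rho| <= e].
Proof.
move=> Az ez.
have [d0 lL] := lam_facts.
have Wge0 : forall k, 0 <= W z k.
  move=> k; apply: le_trans (W_lb z k); rewrite mulr_ge0 ?sqr_ge0 //; lra.
have Wle0 : forall k, W z k <= W z 0 by move=> k; exact: (W_noninc Az ez).
pose M := 1 + W z 0 / (1 - lam * L1).
have hM : forall k, `|y k.+1 - z| <= M.
  move=> k; have := W_lb z k; have := Wle0 k.
  have p0 : 0 < 1 - lam * L1 by lra.
  move=> h1 h2.
  have : `|y k.+1 - z| ^+ 2 <= W z 0 / (1 - lam * L1).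
    by rewrite ler_pdivlMr // mulrC; apply: le_trans h2 h1.
  rewrite /M; have := normr_ge0 (y k.+1 - z).
  move: (`|y k.+1 - z|) (W z 0 / (1 - lam * L1)) => a b ha hb; nra.
have hinf : has_inf (range (W z)).
  split; first by exists (W z 0), 0.
  by exists 0 => _ [k _ <-].
pose l := inf (range (W z)).
have Wl : forall k, l <= W z k by move=> k; apply: (ge_inf hinf.2); exists k.
have Wcv : forall e, 0 < e -> exists N, forall k, (N <= k)%N -> W z k <= l + e.
  move=> e e0; have [_ [N _ <-] hN] := inf_adherent e0 hinf.
  exists N => k hk; apply: le_trans (ltW hN); exact: (W_noninc Az ez).
have hD2 : forall e, 0 < e -> exists N, forall k, (N <= k)%N -> `|y k.+2 - y k.+1| ^+ 2 <= e.
  move=> e e0.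
  have [N hN] := Wcv _ (mulr_gt0 e0 d0).
  exists N => k hk.
  have := lyap_step k Az ez; have := hN k hk; have := Wl k.+1.
  move: (W z k.+1) (W z k) (`|y k.+2 - y k.+1| ^+ 2) => p q r h1 h2 h3.
  have : (1 - lam * (4 * L1 + L2) / 2) * r <= e * (1 - lam * (4 * L1 + L2) / 2) by lra.
  by rewrite mulrC ler_pM2r.
have hD : forall e, 0 < e -> exists N, forall k, (N <= k)%N -> `|y k.+1 - y k| <= e.
  move=> e e0; have [N hN] := hD2 _ (mulr_gt0 e0 e0).
  exists N.+1 => k hk.
  case: k hk => // k hk.
  apply: sq_le; [exact: normr_ge0 | exact: ltW | rewrite [e ^+ 2]expr2; exact: hN].
split; first by exists M.
  exact: hD.
exists l => e e0.
have M0 : 0 <= M by apply: le_trans (hM 0%N); exact: normr_ge0.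
have K0 : 0 <= 2 * lam * (M * L1) + lam * L1.
  by rewrite addr_ge0 // mulr_ge0 ?mulr_ge0 // ltW.
have e20 : 0 < e / 2 by rewrite divr_gt0.
have [eta [eta0 [eta1 hK]]] := pick_eta K0 e20.
have [N1 hN1] := hD eta eta0.
have [N2 hN2] := Wcv _ e20.
exists (maxn N1 N2).+1 => k hk.
case: k hk => // k hk.
have k1 : (N1 <= k)%N by move: hk; rewrite ltnS geq_max => /andP[].
have k2 : (N2 <= k)%N by move: hk; rewrite ltnS geq_max => /andP[].
have h1 := hN1 k k1; have h2 := hN2 k k2; have h3 := Wl k; have h4 := hM k.
have h5 := ipB_le (y k.+1 - z) (y k.+1) (y k).
have h6 := ipB_le (- (y k.+1 - z)) (y k.+1) (y k).
rewrite ipNl normrN in h6.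
rewrite ipC in h5 h6.
move: h1 h2 h3 h4 h5 h6; rewrite /W.
have := normr_ge0 (y k.+1 - y k); have := normr_ge0 (y k.+1 - z).
move: (`|y k.+1 - z|) (`|y k.+1 - y k|) (ip (B (y k.+1) - B (y k)) (y k.+1 - z)) => p q r.
move=> p0 q0 h1 h2 h3 h4 h5 h6.
have hq : q * (p * L1) <= eta * (M * L1).
  apply: ler_pM => //; first by rewrite mulr_ge0.
  by apply: ler_wpM2r.
have hq2 : q ^+ 2 <= eta by nra.
have lL0 : 0 <= lam * L1 by rewrite mulr_ge0 // ltW.
have t1 : lam * (q * (p * L1)) <= lam * (eta * (M * L1)) by apply: ler_wpM2l => //; exact: ltW.
have t2 : lam * L1 * q ^+ 2 <= lam * L1 * eta by apply: ler_wpM2l.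
have e1 : eta * (2 * lam * (M * L1) + lam * L1) = 2 * (lam * (eta * (M * L1))) + lam * L1 * eta by ring.
rewrite e1 in hK.
have e2 : p * (L1 * q) = q * (p * L1) by ring.
rewrite e2 in h5 h6.
have t3 : lam * r <= lam * (q * (p * L1)) by apply: ler_wpM2l => //; exact: ltW.
have t4 : - (lam * (q * (p * L1))) <= lam * r.
  have := ler_wpM2l (ltW hlam) h6; lra.
have t5 : 0 <= lam * L1 * q ^+ 2 by rewrite mulr_ge0 // sqr_ge0.
rewrite ler_norml; apply/andP; split; lra.
Qed.


Hypothesis hz : exists z, zero_ABC A B C z.

Lemma D_mono a b : 0 <= ip (a - b) ((B a + C a) - (B b + C b)).
Proof.
rewrite opprD addrACA ipDr.
have h1 := hB a b.
have h2 : 0 <= ip (a - b) (C a - C b).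
  apply: le_trans (hC a b); rewrite mulr_ge0 ?sqr_ge0 // invr_ge0 ltW //.
lra.
Qed.

Lemma D_lip a b : `|(B a + C a) - (B b + C b)| <= (L1 + L2) * `|a - b|.
Proof.
rewrite opprD addrACA; apply: le_trans (ler_normD _ _) _.
have := hBL a b; have := C_lip a b; lra.
Qed.

Lemma ybound : exists Mb, forall k, `|y k| <= Mb.
Proof.
have [z0 [az0 [Az0 ez0]]] := hz.
have [[M1 hM1] _ _] := fejer Az0 ez0.
exists (`|y 0%N| + M1 + `|z0|) => k.
have M10 : 0 <= M1 by apply: le_trans (hM1 0%N); exact: normr_ge0.
case: k => [|k]; first by have := normr_ge0 z0; lra.
have := ler_normD (y k.+1 - z0) z0; rewrite subrK.
have := hM1 k; have := normr_ge0 (y 0%N); lra.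
Qed.

Lemma demi y' a : A y' a -> forall e, 0 < e -> exists N, forall k, (N <= k)%N ->
  - e <= ip (y k - y') (- a - (B y' + C y')).
Proof.
move=> Ay' e e0.
have [z0 [az0 [Az0 ez0]]] := hz.
have [_ hD _] := fejer Az0 ez0.
have [Mb hMb] := ybound.
have Mb0 : 0 <= Mb by apply: le_trans (hMb 0%N); exact: normr_ge0.
pose K := (Mb + `|y'|) * (1 + 2 * lam * L1 + lam * L2).
have lL1 : 0 <= lam * L1 by rewrite mulr_ge0 // ltW.
have lL2 : 0 <= lam * L2 by rewrite mulr_ge0 // ltW.
have K0 : 0 <= K.
  rewrite /K mulr_ge0 //; first by rewrite addr_ge0.
  have h1 := lL1; have h2 := lL2; lra.
have [eta [eta0 [eta1 hK]]] := pick_eta K0 (mulr_gt0 hlam e0).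
have [N hN] := hD eta eta0.
exists N.+2 => k; case: k => [|[|j]] // hj.
have jN : (N <= j)%N by [].
have [u [Au eq]] := hy j.
move: eq Au.
set a2 := y j.+2; set b := y j.+1; set c := y j.
move=> eq Au.
set X := a2 - y'.
have m1 : 0 <= ip X (u - a) by exact: Amono.
have m2 : 0 <= ip X ((B a2 + C a2) - (B y' + C y')) by exact: D_mono.
have E1 := congr1 (ip X) eq.
rewrite !ipDr !ipNr !ipZr in E1.
have d1 : `|a2 - b| <= eta by exact: (hN j.+1 (leqW jN)).
have d2 : `|b - c| <= eta by exact: (hN j jN).
have X0 : 0 <= `|X| by exact: normr_ge0.
have hX : `|X| <= Mb + `|y'|.
  apply: le_trans (ler_normD _ _) _; rewrite normrN lerD2r; exact: hMb.
have b1 : ip X (b - a2) <= `|X| * eta.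
  apply: le_trans (ler_norm _) (le_trans (CS _ _) _); rewrite (distrC b a2).
  by apply: ler_wpM2l.
have b2 : lam * ip X (B a2 - B b) <= lam * (`|X| * (L1 * eta)).
  apply: ler_wpM2l; first exact: ltW.
  apply: le_trans (ipB_le X a2 b) _; apply: ler_wpM2l => //; by apply: ler_wpM2l.
have b3 : - (lam * ip X (B b - B c)) <= lam * (`|X| * (L1 * eta)).
  rewrite -mulrN; apply: ler_wpM2l; first exact: ltW.
  rewrite -ipNl; apply: le_trans (ipB_le (- X) b c) _; rewrite normrN.
  apply: ler_wpM2l => //; by apply: ler_wpM2l.
have b4 : lam * ip X (C a2 - C b) <= lam * (`|X| * (L2 * eta)).
  apply: ler_wpM2l; first exact: ltW.
  apply: le_trans (ler_norm _) (le_trans (CS _ _) _); apply: ler_wpM2l => //.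
  apply: le_trans (C_lip _ _) _; apply: ler_wpM2l => //; exact: ltW.
have b5 : `|X| * (eta * (1 + 2 * lam * L1 + lam * L2)) <= (Mb + `|y'|) * (eta * (1 + 2 * lam * L1 + lam * L2)).
  apply: ler_wpM2r => //; apply: mulr_ge0; [exact: ltW | lra].
have e5 : eta * K = (Mb + `|y'|) * (eta * (1 + 2 * lam * L1 + lam * L2)) by rewrite /K; ring.
rewrite e5 in hK.
rewrite !ipBr in b1 b2 b3 b4 m1 m2.
rewrite !ipDr in m2.
have : lam * (ip X u + ip X (B a2) + ip X (C a2)) <= lam * e.
  rewrite !mulrDr; lra.
rewrite ler_pM2l // => hfin.
rewrite ipBr ipNr ipDr.
lra.
Qed.

Lemma center_zero P vs m : infinite P -> (forall v c, ub y P v c -> m <= c) -> ub y P vs m ->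
  zero_ABC A B C vs.
Proof.
move=> iP hm hvs.
have [Mb hMb] := ybound.
have hL : 0 <= L1 + L2 by have := hL1; have := hL2; lra.
have := @zero_from_var R H ip hip A (fun v => B v + C v) (L1 + L2) vs hA hL D_lip.
move=> hzv.
have hA' : A vs (- (B vs + C vs)).
  apply: hzv => y' a Ay'.
  set t := - a - (B y' + C y').
  have := halfspace hip iP hm hvs (t := t) (beta := ip y' t).
  rewrite ipBl subr_ge0; apply => e e0.
  have [N hN] := demi Ay' e0; exists N => k hk _.
  have := hN k hk; rewrite ipBl; lra.
exists (- (B vs + C vs)); split => //.
by rewrite -addrA addNr.
Qed.

Lemma main_y : exists p, zero_ABC A B C p /\
  forall w e, 0 < e -> exists N, forall k, (N <= k)%N -> `|ip (y k) w - ip p w| <= e.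
Proof.
have [Mb hMb] := ybound.
apply: (opial hip hMb (Z := zero_ABC A B C)).
  by move=> P vs m iP hm hvs; exact: center_zero iP hm hvs.
move=> z [az [Az ez]].
have [_ _ [rho hrho]] := fejer Az ez.
by exists rho.
Qed.

End Alg.

Theorem theorem5p2 (R : realType) (H : completeNormedModType R)
  (ip : H -> H -> R) (A : H -> set H) (B C : H -> H) (L1 L2 lam : R)
  (x : nat -> H) (xm1 : H) :
  is_inner_product ip ->
  maximally_monotone ip A ->
  monotone_fun ip B -> 0 <= L1 -> lipschitz_with L1 B ->
  0 < L2 -> cocoercive_inv ip L2 C ->
  (exists z, zero_ABC A B C z) ->
  0 < lam -> lam < 2 / (4 * L1 + L2) ->
  in_resolvent lam A
    (x 0%N - (2 * lam) *: B (x 0%N) + lam *: B xm1 - lam *: C (x 0%N)) (x 1%N) ->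
  (forall k : nat, in_resolvent lam A
    (x k.+1 - (2 * lam) *: B (x k.+1) + lam *: B (x k) - lam *: C (x k.+1))
    (x k.+2)) ->
  exists p, zero_ABC A B C p /\ weakly_converges ip x p.
Proof.
move=> hip hA hB hL1 hBL hL2 hC hz hlam hlam2 h0 hxk.
pose y := fun k => if k is k'.+1 then x k' else xm1.
have hy : forall k, in_resolvent lam A
  (y k.+1 - (2 * lam) *: B (y k.+1) + lam *: B (y k) - lam *: C (y k.+1)) (y k.+2).
  by case => [|k] //=.
have [p [zp hp]] := main_y hip hA hB hL1 hBL hL2 hC hlam hlam2 hy hz.
exists p; split => // w.
apply/cvgrPdist_le => e e0.
have [N hN] := hp w e e0.
exists N => // k hk /=.
by rewrite distrC; exact: (hN k.+1 (leqW hk)).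
Qed.
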